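(* Let $R=\mathbb{F}_q+v\mathbb{F}_q+v^2\mathbb{F}_q$ with $v^3=v$, let $C$ be a linear code of length $n$ over $R$ and $C^\perp$ its dual. Then $\Psi(C)^\perp=\Psi(C^\perp)$, where $\Psi(C)^\perp$ is the dual of $\Psi(C)$ in $\mathbb{F}_q^{3n}$ with respect to the standard inner product. Moreover, if $C$ is self-dual, then $\Psi(C)$ is self-dual.
   Context: $q$ is a prime power and $R=\mathbb{F}_q[v]/\langle v^3-v\rangle$; every element of $R$ is uniquely $a_0+va_1+v^2a_2$ with $a_i\in\mathbb{F}_q$. A linear code of length $n$ over $R$ is an $R$-submodule of $R^n$. The Euclidean inner product on $R^n$ is $x\cdot y=\sum_{i=0}^{n-1}x_iy_i$; $C^\perp=\{x\in R^n: x\cdot y=0\ \forall y\in C\}$, and $C$ is self-dual if $C=C^\perp$. Every $c\in R^n$ can be written uniquely as $c=a_0+va_1+v^2a_2$ with $a_0,a_1,a_2\in\mathbb{F}_q^n$, and the Gray map $\Psi:R^n\to\mathbb{F}_q^{3n}$ is $\Psi(c)=(a_0,\ a_0+a_2,\ a_1)$. *)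

(* Defs.v *)
From HB Require Import structures.
From mathcomp Require Import all_boot all_order all_algebra.
Set Implicit Arguments. Unset Strict Implicit. Unset Printing Implicit Defensive.
Import GRing.Theory.
Local Open Scope ring_scope.

(* The ring R = F_q[v]/<v^3 - v>, F_q = F a finite field.
   An element a0 + v a1 + v^2 a2 is represented by the triple ((a0, a1), a2). *)
Definition Rq (F : finFieldType) := (F * F * F)%type.

Section Defs.
Variable F : finFieldType.

Definition c0 (r : Rq F) : F := r.1.1.
Definition c1 (r : Rq F) : F := r.1.2.
Definition c2 (r : Rq F) : F := r.2.

Definition mkR (a0 a1 a2 : F) : Rq F := (a0, a1, a2).

Definition zeroR : Rq F := mkR 0 0 0.
Definition addR (r s : Rq F) : Rq F := mkR (c0 r + c0 s) (c1 r + c1 s) (c2 r + c2 s).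

(* Product in F[v]/<v^3 - v>, using v^3 = v and v^4 = v^2. *)
Definition mulR (r s : Rq F) : Rq F :=
  mkR (c0 r * c0 s)
      (c0 r * c1 s + c1 r * c0 s + c1 r * c2 s + c2 r * c1 s)
      (c0 r * c2 s + c2 r * c0 s + c1 r * c1 s + c2 r * c2 s).

Definition Rword (n : nat) := {ffun 'I_n -> Rq F}.

Definition addW n (x y : Rword n) : Rword n := [ffun i => addR (x i) (y i)].
Definition scaleW n (r : Rq F) (x : Rword n) : Rword n := [ffun i => mulR r (x i)].
Definition zeroW n : Rword n := [ffun => zeroR].

Definition is_linear_code n (C : {set Rword n}) : Prop :=
  [/\ zeroW n \in C,
      forall x y, x \in C -> y \in C -> addW x y \in C
    & forall r x, x \in C -> scaleW r x \in C].

Definition dotR n (x y : Rword n) : Rq F :=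
  mkR (\sum_(i < n) c0 (mulR (x i) (y i)))
      (\sum_(i < n) c1 (mulR (x i) (y i)))
      (\sum_(i < n) c2 (mulR (x i) (y i))).

Definition dualR n (C : {set Rword n}) : {set Rword n} :=
  [set x | [forall y in C, dotR x y == zeroR]].

Definition self_dualR n (C : {set Rword n}) : Prop := C = dualR C.

Definition compW n (k : Rq F -> F) (x : Rword n) : 'rV[F]_n := \row_i k (x i).

Definition Psi n (x : Rword n) : 'rV[F]_(n + n + n) :=
  row_mx (row_mx (compW c0 x) (compW c0 x + compW c2 x)) (compW c1 x).

Definition dotF m (x y : 'rV[F]_m) : F := \sum_(i < m) x 0 i * y 0 i.

Definition dualF m (D : {set 'rV[F]_m}) : {set 'rV[F]_m} :=
  [set x | [forall y in D, dotF x y == 0]].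

End Defs.

Arguments Psi {F n} x.
Arguments dualR {F n} C.
Arguments dualF {F m} D.
Arguments is_linear_code {F n} C.
Arguments self_dualR {F n} C.

(* Main.v *)
Require Import Defs.
From mathcomp Require Import all_boot all_order all_algebra.
From mathcomp Require Import ring.
Set Implicit Arguments. Unset Strict Implicit. Unset Printing Implicit Defensive.
Import GRing.Theory.
Local Open Scope ring_scope.

Lemma dotF_row (F : finFieldType) m k (a c : 'rV[F]_m) (b d : 'rV[F]_k) :
  dotF (row_mx a b) (row_mx c d) = dotF a c + dotF b d.
Proof.
rewrite /dotF big_split_ord /=; congr (_ + _); apply: eq_bigr => i _;
  by rewrite ?row_mxEl ?row_mxEr.
Qed.

Lemma dotF_Psi (F : finFieldType) n (x y : Rword F n) :
  dotF (Psi x) (Psi y) = \sum_(i < n) (c0 (x i) * c0 (y i)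
     + (c0 (x i) + c2 (x i)) * (c0 (y i) + c2 (y i)) + c1 (x i) * c1 (y i)).
Proof.
rewrite /Psi !dotF_row /dotF -!big_split /=; apply: eq_bigr => i _.
by rewrite !mxE.
Qed.

Definition vR (F : finFieldType) : Rq F := mkR 0 1 0.
Definition v2R (F : finFieldType) : Rq F := mkR 0 0 1.

Theorem theorem6 (F : finFieldType) (n : nat) (C : {set Rword F n}) :
  is_linear_code C ->
  dualF (Psi @: C) = Psi @: dualR C /\
  (self_dualR C -> dualF (Psi @: C) = Psi @: C).
Proof.
move=> [C0 Cadd Cscale].
have H1 : dualF (Psi @: C) = Psi @: dualR C.
  apply/setP => w; apply/idP/idP.
  - rewrite inE => /forallP Hw.
    pose y : Rword F n := [ffun i => mkR (w 0 (lshift n (lshift n i)))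
       (w 0 (rshift (n + n) i))
       (w 0 (lshift n (rshift n i)) - w 0 (lshift n (lshift n i)))].
    have Hy : w = Psi y.
      apply/rowP => j; rewrite /Psi -[j]splitK; case: (split j) => [k|k] /=.
        rewrite -[k]splitK; case: (split k) => [l|l] /=;
        rewrite !row_mxEl ?row_mxEr !mxE !ffunE /c0 /c1 /c2 /mkR /=; ring.
      rewrite !row_mxEr !mxE !ffunE /c0 /c1 /c2 /mkR /=; ring.
    rewrite Hy; apply: imset_f; rewrite inE; apply/forallP => c.
    apply/implyP => cC.
    have G : forall c', c' \in C -> dotF (Psi y) (Psi c') = 0.
      move=> c' Hc'; have := Hw (Psi c'); rewrite -Hy imset_f //= => /eqP //.
    have G0 := G _ cC.
    have G1 := G _ (Cscale (vR F) _ cC).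
    have G2 := G _ (Cscale (v2R F) _ cC).
    rewrite !dotF_Psi in G0 G1 G2.
    set S0 := \sum_(i < n) c0 (mulR (y i) (c i)).
    set S1 := \sum_(i < n) c1 (mulR (y i) (c i)).
    set S2 := \sum_(i < n) c2 (mulR (y i) (c i)).
    have E0 : S0 *+ 2 + S2 = 0.
      rewrite -G0 /S0 /S2 -sumrMnl -big_split; apply: eq_bigr => i _.
      rewrite /mulR /c0 /c1 /c2 /=; ring.
    have E1 : S1 = 0.
      rewrite -G1 /S1; apply: eq_bigr => i _.
      rewrite /scaleW !ffunE /vR /v2R /mulR /mkR /c0 /c1 /c2 /=; ring.
    have E2 : S0 + S2 = 0.
      rewrite -G2 /S0 /S2 -big_split; apply: eq_bigr => i _.
      rewrite /scaleW !ffunE /vR /v2R /mulR /mkR /c0 /c1 /c2 /=; ring.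
    have ES0 : S0 = 0.
      have -> : S0 = (S0 *+ 2 + S2) - (S0 + S2) by ring.
      by rewrite E0 E2 subr0.
    have ES2 : S2 = 0 by move: E2; rewrite ES0 add0r.
    by rewrite /dotR -/S0 -/S1 -/S2 ES0 E1 ES2.
  - case/imsetP => x; rewrite inE => /forallP Hx ->.
    rewrite inE; apply/forallP => z; apply/implyP => /imsetP [c cC ->].
    have /eqP := implyP (Hx c) cC.
    rewrite /dotR /zeroR /mkR => [[E0 _ E2]].
    rewrite dotF_Psi.
    apply/eqP; transitivity ((\sum_(i < n) c0 (mulR (x i) (c i))) *+ 2
                 + \sum_(i < n) c2 (mulR (x i) (c i))); last by rewrite E0 E2; ring.
    rewrite -sumrMnl -big_split; apply: eq_bigr => i _.
    rewrite /mulR /c0 /c1 /c2 /=; ring.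
split => // Hsd.
by rewrite H1 -Hsd.
Qed.
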